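(* Fix $E\in\mathbb R$, $\eta,\eta'>0$, a positive integer $N$, and a real symmetric $N\times N$ matrix $\mathbf H$. Let $z=E+\mathbf i\eta$, $z'=E+\mathbf i(\eta+\eta')$, $\mathbf G=(\mathbf H-z)^{-1}=\{G_{jk}\}$ and $\mathbf G'=(\mathbf H-z')^{-1}=\{G'_{jk}\}$. Then for every $j\in[1,N]$, $$\frac{\min\{|G'_{jj}|,|G_{jj}|\}}{\max\{|G'_{jj}|,|G_{jj}|\}}>1-\frac{\eta'}{\eta}.$$ *)

(* Defs.v *)
From HB Require Import structures.
From mathcomp Require Import all_boot all_order all_algebra.
From mathcomp Require Import complex.
Set Implicit Arguments. Unset Strict Implicit. Unset Printing Implicit Defensive.
Import Order.TTheory GRing.Theory Num.Theory.
Local Open Scope ring_scope.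

Definition cabs (R : rcfType) (x : R[i]) : R :=
  let: Complex a b := x in Num.sqrt (a ^+ 2 + b ^+ 2).

Definition resolvent (R : rcfType) (N : nat) (H : 'M[R]_N) (z : R[i]) : 'M[R[i]]_N :=
  invmx (map_mx (real_complex R) H - z%:M).

(* Main.v *)
Require Import Defs.
From HB Require Import structures.
From mathcomp Require Import all_boot all_order all_algebra.
From mathcomp Require Import complex.
From mathcomp Require Import reals.
From mathcomp Require Import lra.
Import Order.TTheory GRing.Theory Num.Theory.
Local Open Scope ring_scope.

Section S.
Variable R : rcfType.

Lemma normC_cabs (x : R[i]) : `|x| = (cabs x)%:C%C.
Proof. by case: x => a b; rewrite normc_def. Qed.

Lemma cabs_ge0 (x : R[i]) : 0 <= cabs x.
Proof. by have := normr_ge0 x; rewrite normC_cabs -[0]/((0:R)%:C%C) lecR. Qed.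

Lemma cabsD (x y : R[i]) : cabs (x + y) <= cabs x + cabs y.
Proof. by rewrite -lecR rmorphD /= -!normC_cabs ler_normD. Qed.

Lemma cabsM (x y : R[i]) : cabs (x * y) = cabs x * cabs y.
Proof. by apply: complexI; rewrite rmorphM /= -!normC_cabs normrM. Qed.

Lemma cabsN (x : R[i]) : cabs (- x) = cabs x.
Proof. by apply: complexI; rewrite -!normC_cabs normrN. Qed.

Lemma cabs_dist (x y : R[i]) : `|cabs x - cabs y| <= cabs (x - y).
Proof.
rewrite ler_norml; apply/andP; split.
  rewrite lerBrDr addrC -lerBrDr opprK; have := cabsD (y - x) x.
  by rewrite subrK -(cabsN (y - x)) opprB addrC.
by rewrite lerBlDr; have := cabsD (x - y) y; rewrite subrK.
Qed.

Lemma cabs_Im (x : R[i]) : `|complex.Im x| <= cabs x.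
Proof.
case: x => a b /=; rewrite -sqrtr_sqr ler_wsqrtr // lerDr sqr_ge0 //.
Qed.

Lemma mulJ_cabs (x : R[i]) : x * x^*%C = ((cabs x) ^+ 2)%:C%C.
Proof.
case: x => a b /=; rewrite sqr_sqrtr ?addr_ge0 ?sqr_ge0 //.
simpc; rewrite [b * a]mulrC addNr -!expr2 //.
Qed.
Lemma final (eta eta' p q S S' T : R): 0 < eta -> 0 < eta' -> 0 < S -> 0 <= S' ->
  eta * S <= p -> (eta + eta') * S' <= q -> `|q - p| <= eta' * T -> T <= (S + S') / 2 ->
  Num.min q p / Num.max q p > 1 - eta' / eta.
Proof.
move=> he he' hS hS' hp hq hd hT.
have hp0 : 0 < p by apply: lt_le_trans hp; rewrite mulr_gt0.
have hq0 : 0 <= q by apply: le_trans hq; rewrite mulr_ge0 // addr_ge0 // ltW.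
set M := Num.max q p.
have hpM : p <= M by rewrite le_max lexx orbT.
have hqM : q <= M by rewrite le_max lexx.
have hM : 0 < M by apply: lt_le_trans hpM.
have h1 : S <= M / eta.
  by rewrite ler_pdivlMr // mulrC; apply: le_trans hpM.
have h2 : S' <= M / (eta + eta').
  by rewrite ler_pdivlMr ?addr_gt0 // mulrC; apply: le_trans hqM.
have h3 : M / (eta + eta') < M / eta.
  by rewrite ltr_pM2l // ltf_pV2 ?posrE ?addr_gt0 // ltrDl.
have h4 : T < M / eta by lra.
have h5 : `|q - p| < eta' / eta * M.
  apply: le_lt_trans hd _; rewrite mulrAC -mulrA ltr_pM2l //.
set k := eta' / eta in h5 *.
move: h5; rewrite /M; case: (leP q p) => hqp h5.
  rewrite ltr_pdivlMr // mulrBl mul1r.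
  by move: h5; rewrite distrC ger0_norm ?subr_ge0 //; lra.
rewrite ltr_pdivlMr ?(lt_trans hp0) // mulrBl mul1r.
by move: h5; rewrite ger0_norm ?subr_ge0 ?ltW //; lra.
Qed.
End S.

Section M.
Variable R : rcfType.
Variable N : nat.
Variable H : 'M[R]_N.
Hypothesis hsym : H^T = H.
Local Notation C := (R[i]).
Local Notation Hc := (map_mx (real_complex R) H).

Lemma Hc_conj : map_mx (@conjc R) Hc = Hc.
Proof. by apply/matrixP => i k; rewrite !mxE conjc_real. Qed.

Lemma Hc_sym : Hc^T = Hc.
Proof. by apply/matrixP => i k; rewrite !mxE -{1}hsym mxE. Qed.

Lemma unit_res (z : C) : complex.Im z != 0 -> (Hc - z%:M) \in unitmx.
Proof.
move=> hz; rewrite unitmxE unitfE; apply/negP => /det0P [v vn0].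
rewrite mulmxBr mul_mx_scalar => /eqP; rewrite subr_eq0 => /eqP hv.
set w := map_mx (@conjc R) v.
have hw : w *m Hc = (z^*)%C *: w.
  by rewrite -Hc_conj /w -map_mxM hv map_mxZ.
set P := v *m w^T.
have e1 : v *m Hc *m w^T = z *: P by rewrite hv -scalemxAl.
have e2 : (v *m Hc *m w^T)^T = (z^*)%C *: P.
  rewrite !trmx_mul Hc_sym trmxK mulmxA hw -scalemxAl.
  congr (_ *: _); apply/matrixP => i k; rewrite !ord1 !mxE.
  by apply: eq_bigr => l _; rewrite !mxE mulrC.
have e3 : (v *m Hc *m w^T)^T = v *m Hc *m w^T.
  by apply/matrixP => i k; rewrite !ord1 mxE.
have : (z - (z^*)%C) * P 0 0 = 0.
  have e4 : z *: P = (z^*)%C *: P by rewrite -e1 -e3 e2.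
  have := congr1 (fun M : 'M_1 => M 0 0) e4; rewrite !mxE => e5.
  by rewrite mulrBl e5 subrr.
move/eqP; apply/negP; rewrite mulf_eq0 negb_or; apply/andP; split.
  rewrite subcJ !mulf_eq0 !negb_or.
  rewrite pnatr_eq0 -[0]/((0:R)%:C%C) (inj_eq (@complexI R)) hz /=.
  by apply/eqP => -[] /eqP; rewrite oner_eq0.
apply: contra vn0 => /eqP hP; apply/eqP/rowP => k.
have hP' : \sum_l v 0 l * (v 0 l)^*%C = 0.
  by rewrite -[RHS]hP mxE; apply: eq_bigr => l _; rewrite !mxE.
have := @psumr_eq0P _ _ xpredT (fun l => v 0 l * (v 0 l)^*%C) (fun l _ => mulcJ_ge0 _) hP' k isT.
by move/eqP; rewrite mulf_eq0 conjc_eq0 orbb mxE => /eqP.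
Qed.

Lemma res_sym (z : C) : (resolvent H z)^T = resolvent H z.
Proof. by rewrite /resolvent trmx_inv linearB /= tr_scalar_mx Hc_sym. Qed.

Lemma res_conj (z : C) : map_mx (@conjc R) (resolvent H z) = resolvent H (z^*)%C.
Proof. by rewrite /resolvent map_invmx map_mxB Hc_conj map_scalar_mx. Qed.

Lemma res_diff (z1 z2 : C) : complex.Im z1 != 0 -> complex.Im z2 != 0 ->
  resolvent H z1 - resolvent H z2 = (z1 - z2) *: (resolvent H z1 *m resolvent H z2).
Proof.
move=> h1 h2; rewrite /resolvent.
have u1 := unit_res z1 h1; have u2 := unit_res z2 h2.
have -> : invmx (Hc - z1%:M) - invmx (Hc - z2%:M) =
   invmx (Hc - z1%:M) *m ((Hc - z2%:M) - (Hc - z1%:M)) *m invmx (Hc - z2%:M).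
  by rewrite mulmxBr mulmxBl -[_ *m _ *m invmx (Hc - z2%:M)]mulmxA mulmxV // mulmx1 mulVmx // mul1mx.
have -> : (Hc - z2%:M) - (Hc - z1%:M) = (z1 - z2)%:M.
  by rewrite opprB addrC addrA subrK raddfB.
by rewrite mul_mx_scalar -scalemxAl.
Qed.

Lemma ward (z : C) (j : 'I_N) : complex.Im z != 0 ->
  complex.Im (resolvent H z j j) = complex.Im z * \sum_k cabs (resolvent H z j k) ^+ 2.
Proof.
move=> hz.
have hzb : complex.Im (z^*)%C != 0 by case: z hz => a b /=; rewrite oppr_eq0.
have := congr1 (fun M : 'M[C]_N => M j j) (res_diff z (z^*)%C hz hzb); rewrite !mxE.
rewrite -res_conj mxE.
have hs k : resolvent H z k j = resolvent H z j k by rewrite -{1}res_sym mxE.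
under eq_bigr => k _ do rewrite mxE hs mulJ_cabs.
rewrite -rmorph_sum /=.
set S := \sum_k _.
clear hs; clearbody S; case: (resolvent H z j j) => gr gi; case: z hz hzb => a b /= hz hzb.
move/(congr1 (@complex.Im R)) => /=.
by rewrite mulr0 add0r => e; lra.
Qed.

Lemma row_pos (z : C) (j : 'I_N) : complex.Im z != 0 ->
  0 < \sum_k cabs (resolvent H z j k) ^+ 2.
Proof.
move=> hz; rewrite lt_def sumr_ge0 ?andbT; last by move=> k _; rewrite sqr_ge0.
apply/eqP => hS.
have h0 k : resolvent H z j k = 0.
  have := @psumr_eq0P _ _ xpredT (fun k => cabs (resolvent H z j k) ^+ 2)
     (fun k _ => sqr_ge0 _) hS k isT.
  move/eqP; rewrite sqrf_eq0 => /eqP hc; apply/normr0_eq0.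
  by rewrite normC_cabs hc.
have := congr1 (fun M : 'M[C]_N => M j j) (mulVmx (unit_res z hz)).
rewrite !mxE eqxx /= big1 => [|k _]; last by rewrite h0 mul0r.
by move/eqP; rewrite eq_sym oner_eq0.
Qed.

Lemma diff_entry (z z' : C) (j : 'I_N) : complex.Im z != 0 -> complex.Im z' != 0 ->
  resolvent H z' j j - resolvent H z j j =
  (z' - z) * \sum_k resolvent H z' j k * resolvent H z j k.
Proof.
move=> hz hz'.
have := congr1 (fun M : 'M[C]_N => M j j) (res_diff z' z hz' hz); rewrite !mxE => ->.
congr (_ * _); apply: eq_bigr => k _; congr (_ * _).
by rewrite -{1}res_sym mxE.
Qed.

Lemma cabs_sum (I : finType) (f : I -> C) : cabs (\sum_i f i) <= \sum_i cabs (f i).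
Proof.
rewrite -lecR rmorph_sum /= -normC_cabs.
under [X in _ <= X]eq_bigr => i _ do rewrite -normC_cabs.
exact: ler_norm_sum.
Qed.
End M.

Theorem corollaryB2 (R : realType) (E eta eta' : R) (heta : 0 < eta) (heta' : 0 < eta')
  (N : nat) (hN : (0 < N)%N) (H : 'M[R]_N) (hsym : H^T = H) (j : 'I_N) :
  let z : R[i] := Complex E eta in
  let z' : R[i] := Complex E (eta + eta') in
  let g := cabs (resolvent H z j j) in
  let g' := cabs (resolvent H z' j j) in
  Num.min g' g / Num.max g' g > 1 - eta' / eta.
Proof.
cbv zeta.
set z : R[i] := Complex E eta; set z' : R[i] := Complex E (eta + eta').
set g := cabs (resolvent H z j j); set g' := cabs (resolvent H z' j j).
have hz : complex.Im z != 0 by rewrite /= gt_eqF.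
have hz' : complex.Im z' != 0 by rewrite /= gt_eqF ?addr_gt0.
pose S := \sum_k cabs (resolvent H z j k) ^+ 2.
pose S' := \sum_k cabs (resolvent H z' j k) ^+ 2.
pose T := \sum_k cabs (resolvent H z' j k) * cabs (resolvent H z j k).
apply: (@final _ eta eta' g g' S S' T heta heta').
- exact: row_pos hsym z j hz.
- by apply: sumr_ge0 => k _; rewrite sqr_ge0.
- have := @ward _ _ H hsym z j hz; rewrite /= => <-.
  exact: le_trans (ler_norm _) (cabs_Im _ _).
- have := @ward _ _ H hsym z' j hz'; rewrite /= => <-.
  exact: le_trans (ler_norm _) (cabs_Im _ _).
- apply: le_trans (cabs_dist _ _ _) _.
  rewrite (@diff_entry _ _ H hsym z z' j hz hz') cabsM.
  have -> : cabs (z' - z) = eta'.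
    rewrite /= subrr expr0n add0r addrAC subrr add0r sqrtr_sqr gtr0_norm //.
  rewrite ler_pM2l //; apply: le_trans (cabs_sum _ _ _) _.
  by apply: ler_sum => k _; rewrite cabsM.
- rewrite ler_pdivlMr // -big_split mulr_suml /=.
  apply: ler_sum => k _.
  have := cabs_ge0 _ (resolvent H z j k); have := cabs_ge0 _ (resolvent H z' j k).
  move: (cabs (resolvent H z j k)) (cabs (resolvent H z' j k)) => a b ha hb.
  by have := sqr_ge0 (a - b); rewrite sqrrB; lra.
Qed.
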